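(* Let $x,y,z$ be real numbers with $x\ge 2$ such that $\Psi(x+z,y)-\Psi(x,y)>\pi(y)$. Then $g(\lfloor x\rfloor)<z$.
   Context: $\pi(y)$ is the number of primes $\le y$. For real $x,y$, $\Psi(x,y)$ denotes the number of positive integers $\le x$ all of whose prime factors are $\le y$. For integers $n>1$ and $k\ge 1$, say that $(n,k)$ has a prime representation if there are distinct primes $P_1,\dots,P_k$ with $P_j\mid (n+j)$ for $1\le j\le k$; $g(n)$ is the largest positive integer $k$ such that $(n,k)$ has a prime representation. *)

(* Defs.v *)
From mathcomp Require Import all_boot.
From Stdlib Require Import Reals ClassicalEpsilon.

Set Implicit Arguments.
Unset Strict Implicit.
Unset Printing Implicit Defensive.

Definition Rleb (r1 r2 : R) : bool := if Rle_dec r1 r2 then true else false.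

(* floor of a real, truncated at 0 (as a nat); for r >= 0 this is the usual floor *)
Definition floorN (r : R) : nat := Z.to_nat (Int_part r).

Definition smooth (y : R) (m : nat) : bool := all (fun p => Rleb (INR p) y) (primes m).

Definition Psi (x y : R) : nat := count (smooth y) (iota 1 (floorN x)).

Definition primepi (y : R) : nat := count prime (iota 1 (floorN y)).

Definition has_prime_rep (n k : nat) : Prop :=
  (1 <= k)%N /\
  exists P : nat -> nat,
    (forall j, (1 <= j <= k)%N -> prime (P j) /\ (P j %| n + j)%N) /\
    (forall i j, (1 <= i <= k)%N -> (1 <= j <= k)%N -> P i = P j -> i = j).

(* g(n) = the largest positive integer k such that (n,k) has a prime representation
   (chosen by Hilbert's epsilon; this is that largest k whenever it exists). *)
Definition is_g (n k : nat) : Prop :=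
  has_prime_rep n k /\ forall k', has_prime_rep n k' -> (k' <= k)%N.

Definition g (n : nat) : nat := epsilon (inhabits 0%N) (is_g n).

(* Main.v *)
Require Import Defs.
From mathcomp Require Import all_boot.
From Stdlib Require Import Reals.
From Stdlib Require Import ClassicalEpsilon Lra Lia.
From mathcomp Require Import zify.

Lemma floorN_lt (r : R) (m : nat) : (0 < m)%N -> (r < INR m)%R -> (floorN r < m)%N.
Proof.
move=> hm h; rewrite /floorN.
have [h1 _] := base_Int_part r.
rewrite INR_IZR_INZ in h.
have : (Int_part r < Z.of_nat m)%Z by apply: lt_IZR; lra.
lia.
Qed.

Lemma floorN_ge (r : R) (m : nat) : (INR m <= r)%R -> (m <= floorN r)%N.
Proof.
move=> h; rewrite /floorN.
have [_ h2] := base_Int_part r.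
rewrite INR_IZR_INZ in h.
have : (Z.of_nat m - 1 < Int_part r)%Z by apply: lt_IZR; rewrite minus_IZR; lra.
lia.
Qed.

Lemma floorN_spec (r : R) : (0 <= r)%R -> (r < INR (floorN r) + 1)%R.
Proof.
move=> h; rewrite /floorN.
have [_ h2] := base_Int_part r.
have hz : (0 <= Int_part r)%Z.
  have : (-1 < Int_part r)%Z by apply: lt_IZR; lra.
  lia.
rewrite INR_IZR_INZ Znat.Z2Nat.id //; lra.
Qed.

Lemma hpr_bound n k : has_prime_rep n k -> (k <= n.+1)%N.
Proof.
case=> k1 [P [HP Hinj]].
set f := fun p => (p.-1)./2.
have U : uniq (map (f \o P) (iota 1 k)).
  rewrite map_inj_in_uniq ?iota_uniq // => i j; rewrite !mem_iota => hi hj /= e.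
  have hi' : (1 <= i <= k)%N by lia.
  have hj' : (1 <= j <= k)%N by lia.
  apply: (Hinj _ _ hi' hj').
  have [pi _] := HP _ hi'; have [pj _] := HP _ hj'.
  move: e; rewrite /f.
  have := odd_double_half (P i); have := odd_double_half (P j).
  have := prime_gt1 pi; have := prime_gt1 pj.
  case: (boolP (odd (P i))) => oi; case: (boolP (odd (P j))) => oj /=.
  - lia.
  - move/(prime_oddPn pj): oj => ->; have := odd_prime_gt2 oi pi. lia.
  - move/(prime_oddPn pi): oi => ->; have := odd_prime_gt2 oj pj. lia.
  - move/(prime_oddPn pi): oi => ->; move/(prime_oddPn pj): oj => ->. lia.
have S : {subset map (f \o P) (iota 1 k) <= iota 0 ((n + k).-1./2.+1)}.
  move=> v /mapP [j]; rewrite mem_iota => hj ->; rewrite mem_iota /= /f.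
  have hj' : (1 <= j <= k)%N by lia.
  have [pj dj] := HP _ hj'.
  have := dvdn_leq _ dj.
  have hpos : (0 < n + j)%N by lia.
  move=> /(_ hpos) hle.
  have := odd_double_half (P j); have := odd_double_half (n + k).-1.
  have := odd_double_half (P j).-1.
  case: (odd _); case: (odd _); case: (odd _) => /=; lia.
have := uniq_leq_size U S; rewrite size_map !size_iota.
have := odd_double_half (n + k).-1; case: (odd _) => /=; lia.
Qed.

Lemma hpr_1 n : (1 <= n)%N -> has_prime_rep n 1.
Proof.
move=> hn; split => //; exists (fun _ => pdiv (n + 1)); split.
  move=> j hj; have -> : j = 1%N by lia.
  split; [apply: pdiv_prime; lia | exact: pdiv_dvd].
move=> i j hi hj _; lia.
Qed.

Lemma g_spec n : (1 <= n)%N -> is_g n (g n).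
Proof.
move=> hn; rewrite /g; apply: epsilon_spec.
pose Pb k := if excluded_middle_informative (has_prime_rep n k) then true else false.
have PbE k : Pb k = true <-> has_prime_rep n k.
  rewrite /Pb; case: excluded_middle_informative => //.
have ex : exists i, Pb i by exists 1%N; apply/PbE; exact: hpr_1.
have ub : forall i, Pb i -> (i <= n.+1)%N by move=> i /PbE; exact: hpr_bound.
case: (ex_maxnP ex ub) => m /PbE hm hmax.
exists m; split => // k' /PbE; exact: hmax.
Qed.

Theorem lemma2p4 (x y z : R) :
  (2 <= x)%R ->
  (INR (Psi (x + z) y) - INR (Psi x y) > INR (primepi y))%R ->
  (INR (g (floorN x)) < z)%R.
Proof.
move=> hx hPsi.
set n := floorN x.
have hn : (2 <= n)%N by apply: floorN_ge; simpl; lra.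
have [[k1 [P [HP Hinj]]] _] := @g_spec n (ltnW hn).
set k := g n in k1 P HP Hinj *.
apply: Rnot_le_lt => hz.
set b := floorN (x + z).
have hb : (b < n + k + 1)%N.
  apply: floorN_lt; first lia; rewrite !plus_INR /=.
  have h0 : (0 <= x)%R by lra.
  have := @floorN_spec x h0.
  rewrite -/n; lra.
set c := (b - n)%N.
have Hc : (count (smooth y) (iota (1 + n) c) <= primepi y)%N.
  rewrite -size_filter /primepi -size_filter.
  set L := filter _ _.
  have U : uniq (map (fun m => P (m - n)%N) L).
    rewrite map_inj_in_uniq ?filter_uniq ?iota_uniq // => i j.
    rewrite !mem_filter !mem_iota => /andP [_ hi] /andP [_ hj] e.
    have hi' : (1 <= i - n <= k)%N by rewrite /c in hi hj; lia.
    have hj' : (1 <= j - n <= k)%N by rewrite /c in hi hj; lia.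
    have := Hinj _ _ hi' hj' e; lia.
  apply: (leq_trans _ (uniq_leq_size U _)); first by rewrite size_map.
  move=> p /mapP [m]; rewrite mem_filter mem_iota => /andP [sm hm] ->.
  have hm' : (1 <= m - n <= k)%N by rewrite /c in hm; lia.
  have [pp dp] := HP _ hm'.
  have e : (n + (m - n) = m)%N by lia.
  rewrite e in dp.
  have pin : P (m - n)%N \in primes m by rewrite mem_primes pp dp andbT; lia.
  move: sm; rewrite /smooth => /allP /(_ _ pin); rewrite /Rleb.
  case: Rle_dec => // hle _.
  rewrite mem_filter pp mem_iota /=.
  apply/andP; split; [exact: prime_gt0 pp | rewrite add1n ltnS; exact: (@floorN_ge _ _ hle)].
have Hb : (Psi (x + z) y <= Psi x y + primepi y)%N.
  rewrite /Psi -/b -/n.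
  have e1 : iota 1 (n + c) = iota 1 n ++ iota (1 + n) c by rewrite iotaD.
  have e2 : iota 1 (b + (n + c - b)) = iota 1 b ++ iota (1 + b) (n + c - b)
    by rewrite iotaD.
  have e3 : (b + (n + c - b) = n + c)%N by rewrite /c; lia.
  rewrite e3 e1 in e2.
  have : (count (smooth y) (iota 1 b) <= count (smooth y) (iota 1 n ++ iota (1 + n) c))%N
    by rewrite e2 count_cat leq_addr.
  rewrite count_cat; lia.
have := le_INR _ _ (elimT leP Hb); rewrite plus_INR; lra.
Qed.
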